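(* Let $P\in(0,1)$ be irrational and let $V\in\mathbb R^3$ be a good offset for $\Xi_P$. Then the tiling defined by $\Xi_{P,V}$ is coherent: for any two unit squares sharing an edge $e$, the letter of $e$ (as seen from each square) occurs in the label of one square if and only if it occurs in the label of the other.
   Context: Let $\Lambda_P\subset\mathbb R^3$ be the lattice generated by $(2,P,P),(0,2,0),(0,0,2)$, $X_P=\mathbb R^3/\Lambda_P$ with coordinates $(T,U_1,U_2)$ and fundamental domain $[-1,1]^3$, $\Xi_P(x,y)=(2Px+2y,2Px,2Px+2Py)\bmod\Lambda_P$, and for $V\in\mathbb R^3$, $\Xi_{P,V}=\Xi_P+V\bmod\Lambda_P$. Each fiber $\{T\}\times[-1,1]^2$ is partitioned: given $u_1\le u_2\le u_3$, the lines $U_1=u_i$, $U_2=u_i$ cut $[-1,1]^2$ into a $4\times4$ grid of rectangles indexed by (column $a$, row $b$), columns in increasing $U_1$, rows in increasing $U_2$. Special rectangles with single letters: for $T\in[-1,-1+P]$: $(u_1,u_2,u_3)=(T,1-P,2-P+T)$, W $(4,4)$, N $(1,3)$, E $(2,2)$, S $(3,1)$; for $T\in[-1+P,1-P]$: $(-1+P,T,1-P)$, N $(1,4)$, E $(3,3)$, W $(2,2)$, S $(4,1)$; for $T\in[1-P,1]$: $(-2+P+T,-1+P,T)$, N $(2,4)$, W $(3,3)$, S $(4,2)$, E $(1,1)$. A non-special rectangle gets the unordered pair of letters of the special rectangles in its column and in its row; special rectangles get the empty label. The pieces of the partition are the unions over all fibers of rectangles with a given label. Tile centers are the points $(m+\frac12,n+\frac12)$,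 $m,n\in\mathbb Z$, each the center of a unit square with edges N, S, E, W. $V$ is a good offset if $\Xi_{P,V}(c)$ lies in the interior of a piece for every tile center $c$; the tile at $c$ then carries the label of that piece, a label $\{X,Y\}$ meaning a segment joining the midpoints of edges $X$ and $Y$. *)

(* Defs.v *)
From Stdlib Require Import Reals ZArith.
Open Scope R_scope.

Inductive letter := lN | lS | lE | lW.

Definition irrational (x : R) : Prop :=
  forall p q : Z, q <> 0%Z -> x <> IZR p / IZR q.

Definition inLat (P a b c : R) : Prop :=
  exists i j k : Z,
    a = 2 * IZR i /\ b = P * IZR i + 2 * IZR j /\ c = P * IZR i + 2 * IZR k.

(* Data of the fiber partition at height T: the cut values u1,u2,u3 and the
   (column,row) position of the special rectangle of each letter.  The three
   T-ranges are closed, as in the paper (they overlap at their endpoints). *)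
Definition fiber_data (P T u1 u2 u3 : R) (sp : letter -> nat * nat) : Prop :=
  (-1 <= T <= -1 + P /\ u1 = T /\ u2 = 1 - P /\ u3 = 2 - P + T /\
     sp lW = (4, 4)%nat /\ sp lN = (1, 3)%nat /\ sp lE = (2, 2)%nat /\ sp lS = (3, 1)%nat)
  \/
  (-1 + P <= T <= 1 - P /\ u1 = -1 + P /\ u2 = T /\ u3 = 1 - P /\
     sp lN = (1, 4)%nat /\ sp lE = (3, 3)%nat /\ sp lW = (2, 2)%nat /\ sp lS = (4, 1)%nat)
  \/
  (1 - P <= T <= 1 /\ u1 = -2 + P + T /\ u2 = -1 + P /\ u3 = T /\
     sp lN = (2, 4)%nat /\ sp lW = (3, 3)%nat /\ sp lS = (4, 2)%nat /\ sp lE = (1, 1)%nat).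

Definition cut (u1 u2 u3 : R) (k : nat) : R :=
  match k with
  | O => -1
  | 1%nat => u1
  | 2%nat => u2
  | 3%nat => u3
  | _ => 1
  end.

(* Closed grid rectangle (a,b), a = column (U1), b = row (U2), a,b in 1..4. *)
Definition in_rect (u1 u2 u3 : R) (a b : nat) (x y : R) : Prop :=
  (1 <= a <= 4)%nat /\ (1 <= b <= 4)%nat /\
  cut u1 u2 u3 (a - 1) <= x <= cut u1 u2 u3 a /\
  cut u1 u2 u3 (b - 1) <= y <= cut u1 u2 u3 b.

Definition is_special (sp : letter -> nat * nat) (a b : nat) : Prop :=
  exists Z, sp Z = (a, b).

Definition rect_has (sp : letter -> nat * nat) (a b : nat) (Z : letter) : Prop :=
  ~ is_special sp a b /\ (fst (sp Z) = a \/ snd (sp Z) = b).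

(* A label is a set of letters.  (t,v1,v2) in R^3 belongs to the (lifted,
   Lambda_P-periodic) piece with label L if its representative in the
   fundamental domain [-1,1]^3 lies in a (closed) rectangle of its fiber
   whose label is exactly L. *)
Definition in_piece (P : R) (L : letter -> Prop) (t v1 v2 : R) : Prop :=
  exists t0 x y : R,
    inLat P (t - t0) (v1 - x) (v2 - y) /\
    -1 <= t0 <= 1 /\ -1 <= x <= 1 /\ -1 <= y <= 1 /\
    exists (u1 u2 u3 : R) (sp : letter -> nat * nat) (a b : nat),
      fiber_data P t0 u1 u2 u3 sp /\ in_rect u1 u2 u3 a b x y /\
      forall Z, rect_has sp a b Z <-> L Z.

(* Interior in R^3 (the quotient map R^3 -> X_P is a local homeomorphism). *)
Definition interior3 (S : R -> R -> R -> Prop) (t v1 v2 : R) : Prop :=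
  exists eps, 0 < eps /\
    forall t' v1' v2', Rabs (t' - t) < eps -> Rabs (v1' - v1) < eps ->
      Rabs (v2' - v2) < eps -> S t' v1' v2'.

(* Xi_{P,V}(x,y), as a point of R^3 (reduction mod Lambda_P is built into
   the periodic pieces). *)
Definition XiT (P V1 : R) (x y : R) : R := 2 * P * x + 2 * y + V1.
Definition XiU1 (P V2 : R) (x y : R) : R := 2 * P * x + V2.
Definition XiU2 (P V3 : R) (x y : R) : R := 2 * P * x + 2 * P * y + V3.

Definition tile_label (P V1 V2 V3 : R) (m n : Z) (L : letter -> Prop) : Prop :=
  let x := IZR m + / 2 in
  let y := IZR n + / 2 in
  interior3 (in_piece P L) (XiT P V1 x y) (XiU1 P V2 x y) (XiU2 P V3 x y).

Definition good_offset (P V1 V2 V3 : R) : Prop :=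
  forall m n : Z, exists L, tile_label P V1 V2 V3 m n L.

Definition coherent (P V1 V2 V3 : R) : Prop :=
  forall (m n : Z) (L L' : letter -> Prop),
    (tile_label P V1 V2 V3 m n L -> tile_label P V1 V2 V3 (m + 1) n L' ->
       (L lE <-> L' lW)) /\
    (tile_label P V1 V2 V3 m n L -> tile_label P V1 V2 V3 m (n + 1) L' ->
       (L lN <-> L' lS)).

(* Main.v *)
Require Import Defs.
From Stdlib Require Import Reals ZArith Lra Lia List.
Import ListNotations.
Open Scope R_scope.

Definition notZ (z : R) := forall n : Z, z <> IZR n.

Lemma notZ_opp z : notZ z -> notZ (- z).
Proof. intros H n E. apply (H (- n)%Z). rewrite opp_IZR. lra. Qed.

Lemma avoid1 (a k lo hi : R) : k <> 0 -> lo < hi ->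
  exists lo' hi', lo <= lo' /\ lo' < hi' /\ hi' <= hi /\
    forall s, lo' < s < hi' -> notZ (a + k * s).
Proof.
  intros Hk Hlh.
  assert (gen : forall a k, 0 < k -> exists lo' hi', lo <= lo' /\ lo' < hi' /\ hi' <= hi /\
    forall s, lo' < s < hi' -> notZ (a + k * s)).
  { clear a k Hk. intros a k Hk.
    set (z := a + k * lo).
    destruct (archimed z) as [Hu1 Hu2].
    set (u := up z) in *.
    exists lo, (Rmin hi (lo + (IZR u - z) / k)).
    assert (0 < (IZR u - z) / k) by (apply Rdiv_lt_0_compat; lra).
    split; [lra|]. split.
    { apply Rmin_glb_lt; lra. }
    split; [apply Rmin_l|].
    intros s [Hs1 Hs2] n E.
    assert (Hs3 : s < lo + (IZR u - z) / k) by (eapply Rlt_le_trans; [exact Hs2| apply Rmin_r]).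
    assert (k * s < k * lo + (IZR u - z)).
    { assert (k * (s - lo) < k * ((IZR u - z) / k)) by (apply Rmult_lt_compat_l; lra).
      replace (k * ((IZR u - z) / k)) with (IZR u - z) in H0 by (field; lra). lra. }
    assert (k * lo < k * s) by (apply Rmult_lt_compat_l; lra).
    assert (IZR n < IZR u) by (unfold z in *; lra).
    assert (IZR (u - 1) < IZR n) by (rewrite minus_IZR; unfold z in *; lra).
    apply lt_IZR in H2. apply lt_IZR in H3. lia. }
  destruct (Rlt_dec 0 k) as [Hp|Hn].
  - apply gen; auto.
  - destruct (gen (- a) (- k)) as (lo' & hi' & h1 & h2 & h3 & h4); [lra|].
    exists lo', hi'. repeat split; auto. intros s Hs.
    replace (a + k * s) with (- (- a + - k * s)) by ring.
    apply notZ_opp. auto.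
Qed.

Lemma avoidL (l : list (R * R)) : forall lo hi, lo < hi ->
  (forall p, In p l -> snd p <> 0) ->
  exists lo' hi', lo <= lo' /\ lo' < hi' /\ hi' <= hi /\
    forall s, lo' < s < hi' -> forall p, In p l -> notZ (fst p + snd p * s).
Proof.
  induction l as [|[a k] l IH]; intros lo hi Hlh Hk.
  - exists lo, hi. repeat split; try lra. intros s _ p [].
  - destruct (avoid1 a k lo hi) as (l1 & h1 & A1 & A2 & A3 & A4); auto.
    { apply (Hk (a, k)). left; reflexivity. }
    destruct (IH l1 h1) as (l2 & h2 & B1 & B2 & B3 & B4); auto.
    { intros p Hp. apply Hk. right; exact Hp. }
    exists l2, h2. repeat split; try lra.
    intros s Hs p [<-|Hp].
    + apply A4. lra.
    + apply B4; auto.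
Qed.
Definition genP (P T X Y : R) := forall m : Z, (-3 <= m <= 3)%Z ->
  notZ (T + IZR m * P) /\ notZ (X + IZR m * P) /\ notZ (Y + IZR m * P) /\
  notZ (X - T + IZR m * P) /\ notZ (Y - T + IZR m * P).

Definition mlist : list Z := [(-3)%Z; (-2)%Z; (-1)%Z; 0%Z; 1%Z; 2%Z; 3%Z].

Lemma choose_s (P t0 x0 y0 wT wX wY lo hi : R) : lo < hi ->
  wT <> 0 -> wX <> 0 -> wY <> 0 -> wX - wT <> 0 -> wY - wT <> 0 ->
  exists s, lo < s < hi /\ genP P (t0 + wT * s) (x0 + wX * s) (y0 + wY * s).
Proof.
  intros Hlh h1 h2 h3 h4 h5.
  set (l := flat_map (fun m => [(t0 + IZR m * P, wT); (x0 + IZR m * P, wX);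
      (y0 + IZR m * P, wY); (x0 - t0 + IZR m * P, wX - wT); (y0 - t0 + IZR m * P, wY - wT)]) mlist).
  destruct (avoidL l lo hi) as (l' & h' & A1 & A2 & A3 & A4); auto.
  { intros p Hp. unfold l in Hp. apply in_flat_map in Hp. destruct Hp as [m [_ Hm]].
    simpl in Hm. intuition (subst; simpl; auto). }
  exists ((l' + h') / 2). split; [lra|].
  intros m Hm.
  assert (Hin : In m mlist) by (unfold mlist; simpl; lia).
  assert (F : forall p, In p [(t0 + IZR m * P, wT); (x0 + IZR m * P, wX);
      (y0 + IZR m * P, wY); (x0 - t0 + IZR m * P, wX - wT); (y0 - t0 + IZR m * P, wY - wT)] ->
      notZ (fst p + snd p * ((l' + h') / 2))).
  { intros p Hp. apply A4; [lra|]. unfold l. apply in_flat_map. exists m. auto. }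
  set (s := (l' + h') / 2) in *.
  repeat split.
  - replace (t0 + wT * s + IZR m * P) with (fst (t0 + IZR m * P, wT) + snd (t0 + IZR m * P, wT) * s) by (simpl; ring).
    apply F; simpl; tauto.
  - replace (x0 + wX * s + IZR m * P) with (fst (x0 + IZR m * P, wX) + snd (x0 + IZR m * P, wX) * s) by (simpl; ring).
    apply F; simpl; tauto.
  - replace (y0 + wY * s + IZR m * P) with (fst (y0 + IZR m * P, wY) + snd (y0 + IZR m * P, wY) * s) by (simpl; ring).
    apply F; simpl; tauto.
  - replace (x0 + wX * s - (t0 + wT * s) + IZR m * P) with (fst (x0 - t0 + IZR m * P, wX - wT) + snd (x0 - t0 + IZR m * P, wX - wT) * s) by (simpl; ring).
    apply F; simpl; tauto.
  - replace (y0 + wY * s - (t0 + wT * s) + IZR m * P) with (fst (y0 - t0 + IZR m * P, wY - wT) + snd (y0 - t0 + IZR m * P, wY - wT) * s) by (simpl; ring).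
    apply F; simpl; tauto.
Qed.

Lemma sign_choice (z c : R) : -1 <= z <= 1 -> 0 < c ->
  exists w, (w = c \/ w = - c) /\ forall s, 0 < s -> s * c < 1 -> -1 < z + w * s < 1.
Proof.
  intros Hz Hc. destruct (Rle_dec z 0).
  - exists c. split; auto. intros s Hs Hsc. assert (0 < c * s) by (apply Rmult_lt_0_compat; lra). lra.
  - exists (- c). split; auto. intros s Hs Hsc. assert (0 < c * s) by (apply Rmult_lt_0_compat; lra). lra.
Qed.

Definition fiber_s (P T u1 u2 u3 : R) (sp : letter -> nat * nat) : Prop :=
  (-1 < T < -1 + P /\ u1 = T /\ u2 = 1 - P /\ u3 = 2 - P + T /\
     sp lW = (4, 4)%nat /\ sp lN = (1, 3)%nat /\ sp lE = (2, 2)%nat /\ sp lS = (3, 1)%nat)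
  \/
  (-1 + P < T < 1 - P /\ u1 = -1 + P /\ u2 = T /\ u3 = 1 - P /\
     sp lN = (1, 4)%nat /\ sp lE = (3, 3)%nat /\ sp lW = (2, 2)%nat /\ sp lS = (4, 1)%nat)
  \/
  (1 - P < T < 1 /\ u1 = -2 + P + T /\ u2 = -1 + P /\ u3 = T /\
     sp lN = (2, 4)%nat /\ sp lW = (3, 3)%nat /\ sp lS = (4, 2)%nat /\ sp lE = (1, 1)%nat).

Lemma le_neq_lt (a b : R) : a <= b -> a <> b -> a < b.
Proof. intros; lra. Qed.

Lemma fiber_strict P T u1 u2 u3 sp : fiber_data P T u1 u2 u3 sp ->
  -1 < T < 1 -> T <> -1 + P -> T <> 1 - P -> fiber_s P T u1 u2 u3 sp.
Proof.
  unfold fiber_data, fiber_s. intros [H|[H|H]] HT h1 h2.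
  - left. destruct H as [[a b] H]. split; [split; [lra| apply le_neq_lt; auto]|exact H].
  - right; left. destruct H as [[a b] H]. split; [split; apply le_neq_lt; auto|exact H].
  - right; right. destruct H as [[a b] H]. split; [split; [apply le_neq_lt; auto; intro; apply h2; lra | lra]|exact H].
Qed.

Definition cutsOK (P T X : R) := -1 < X < 1 /\ X <> T /\ X <> 1 - P /\ X <> 2 - P + T /\
  X <> -1 + P /\ X <> -2 + P + T.

Ltac strict_tac :=
  match goal with
  | |- ?a < ?b => first [ lra | apply le_neq_lt; [lra| intro; match goal with H : _ <> _ |- _ => apply H; lra end]]
  end.

Lemma col_strict P T u1 u2 u3 sp a X : fiber_s P T u1 u2 u3 sp -> cutsOK P T X ->
  (1 <= a <= 4)%nat -> cut u1 u2 u3 (a - 1) <= X <= cut u1 u2 u3 a ->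
  cut u1 u2 u3 (a - 1) < X < cut u1 u2 u3 a.
Proof.
  intros Hf (hX & n1 & n2 & n3 & n4 & n5) Ha Hc.
  destruct Hf as [(hT & e1 & e2 & e3 & _)|[(hT & e1 & e2 & e3 & _)|(hT & e1 & e2 & e3 & _)]];
  subst u1 u2 u3;
  (destruct a as [|[|[|[|[|a]]]]]; [lia| | | | |lia]); cbn [cut Nat.sub] in *;
  split; strict_tac.
Qed.

Ltac rw_sp := repeat match goal with H : _ ?l = (_, _)%nat |- _ => try rewrite H; clear H end.

Ltac coord_tac :=
  match goal with
  | Hf1 : fiber_s _ _ _ _ _ _, Hf2 : fiber_s _ _ _ _ _ _ |- _ =>
    destruct Hf1 as [(? & ? & ? & ? & ? & ? & ? & ?)|[(? & ? & ? & ? & ? & ? & ? & ?)|(? & ? & ? & ? & ? & ? & ? & ?)]];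
    destruct Hf2 as [(? & ? & ? & ? & ? & ? & ? & ?)|[(? & ? & ? & ? & ? & ? & ? & ?)|(? & ? & ? & ? & ? & ? & ? & ?)]];
    subst; try (exfalso; lra)
  end.

Lemma colH P T T' X X' (d j : Z) u1 u2 u3 sp u1' u2' u3' sp' a a' :
  0 < P < 1 -> fiber_s P T u1 u2 u3 sp -> fiber_s P T' u1' u2' u3' sp' ->
  T' = T + 2 * P - 2 * IZR d -> X' = X + (2 - IZR d) * P - 2 * IZR j ->
  (d = 0 \/ d = 1)%Z -> (j = 0 \/ j = 1)%Z ->
  (1 <= a <= 4)%nat -> cut u1 u2 u3 (a - 1) < X < cut u1 u2 u3 a ->
  (1 <= a' <= 4)%nat -> cut u1' u2' u3' (a' - 1) < X' < cut u1' u2' u3' a' ->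
  Nat.eqb a (fst (sp lE)) = (if Z.eqb d 1 then Nat.eqb a' (fst (sp' lW))
                             else negb (Nat.eqb a' (fst (sp' lW)))).
Proof.
  intros HP Hf1 Hf2 HT HX Hd Hj Ha Hc Ha' Hc'.
  destruct Hd as [-> | ->]; destruct Hj as [-> | ->]; coord_tac; rw_sp;
  (destruct a as [|[|[|[|[|a]]]]]; [lia| | | | |lia]);
  (destruct a' as [|[|[|[|[|a']]]]]; [lia| | | | |lia]);
  cbn [cut Nat.sub] in *; cbn; first [reflexivity | exfalso; lra].
Qed.

Lemma colV P T X X' (j : Z) u1 u2 u3 sp u1' u2' u3' sp' a a' :
  0 < P < 1 -> fiber_s P T u1 u2 u3 sp -> fiber_s P T u1' u2' u3' sp' ->
  X' = X - P - 2 * IZR j -> (j = -1 \/ j = 0)%Z ->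
  (1 <= a <= 4)%nat -> cut u1 u2 u3 (a - 1) < X < cut u1 u2 u3 a ->
  (1 <= a' <= 4)%nat -> cut u1' u2' u3' (a' - 1) < X' < cut u1' u2' u3' a' ->
  Nat.eqb a (fst (sp lN)) = Nat.eqb a' (fst (sp' lS)).
Proof.
  intros HP Hf1 Hf2 HX Hj Ha Hc Ha' Hc'.
  destruct Hj as [-> | ->]; coord_tac; rw_sp;
  (destruct a as [|[|[|[|[|a]]]]]; [lia| | | | |lia]);
  (destruct a' as [|[|[|[|[|a']]]]]; [lia| | | | |lia]);
  cbn [cut Nat.sub] in *; cbn; first [reflexivity | exfalso; lra].
Qed.

Lemma rowV P T X X' (j : Z) u1 u2 u3 sp u1' u2' u3' sp' a a' :
  0 < P < 1 -> fiber_s P T u1 u2 u3 sp -> fiber_s P T u1' u2' u3' sp' ->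
  X' = X + P - 2 * IZR j -> (j = 0 \/ j = 1)%Z ->
  (1 <= a <= 4)%nat -> cut u1 u2 u3 (a - 1) < X < cut u1 u2 u3 a ->
  (1 <= a' <= 4)%nat -> cut u1' u2' u3' (a' - 1) < X' < cut u1' u2' u3' a' ->
  Nat.eqb a (snd (sp lN)) = Nat.eqb a' (snd (sp' lS)).
Proof.
  intros HP Hf1 Hf2 HX Hj Ha Hc Ha' Hc'.
  destruct Hj as [-> | ->]; coord_tac; rw_sp;
  (destruct a as [|[|[|[|[|a]]]]]; [lia| | | | |lia]);
  (destruct a' as [|[|[|[|[|a']]]]]; [lia| | | | |lia]);
  cbn [cut Nat.sub] in *; cbn; first [reflexivity | exfalso; lra].
Qed.

Lemma diagEW P T u1 u2 u3 sp : fiber_s P T u1 u2 u3 sp ->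
  snd (sp lE) = fst (sp lE) /\ snd (sp lW) = fst (sp lW).
Proof.
  intros [(? & ? & ? & ? & ? & ? & ? & ?)|[(? & ? & ? & ? & ? & ? & ? & ?)|(? & ? & ? & ? & ? & ? & ? & ?)]];
  rw_sp; split; reflexivity.
Qed.

Lemma rect_has_xor P T u1 u2 u3 sp a b Z : fiber_s P T u1 u2 u3 sp ->
  (1 <= a <= 4)%nat -> (1 <= b <= 4)%nat ->
  (rect_has sp a b Z <-> xorb (Nat.eqb (fst (sp Z)) a) (Nat.eqb (snd (sp Z)) b) = true).
Proof.
  intros Hf Ha Hb. unfold rect_has, is_special.
  destruct Hf as [(? & ? & ? & ? & h1 & h2 & h3 & h4)|[(? & ? & ? & ? & h1 & h2 & h3 & h4)|(? & ? & ? & ? & h1 & h2 & h3 & h4)]];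
  (destruct a as [|[|[|[|[|a]]]]]; [lia| | | | |lia]);
  (destruct b as [|[|[|[|[|b]]]]]; [lia| | | | |lia]);
  destruct Z; rewrite ?h1, ?h2, ?h3, ?h4; cbn;
  (split;
   [ intros [Hns Hor]; first [ reflexivity
                             | exfalso; apply Hns; eexists; eassumption
                             | exfalso; destruct Hor as [Ho|Ho]; cbn in Ho; discriminate ]
   | intro Hx; first [ discriminate Hx
                     | split; [ intros [Z' HZ']; destruct Z'; congruence
                              | first [left; reflexivity | right; reflexivity] ] ] ]).
Qed.

Lemma lat_sub P a1 b1 c1 a2 b2 c2 : inLat P a1 b1 c1 -> inLat P a2 b2 c2 ->
  inLat P (a1 - a2) (b1 - b2) (c1 - c2).
Proof.
  intros (i1 & j1 & k1 & e1 & e2 & e3) (i2 & j2 & k2 & f1 & f2 & f3).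
  exists (i1 - i2)%Z, (j1 - j2)%Z, (k1 - k2)%Z. rewrite !minus_IZR. lra.
Qed.

Lemma lat_ext P a b c a' b' c' : inLat P a b c -> a = a' -> b = b' -> c = c' -> inLat P a' b' c'.
Proof. intros H -> -> ->; exact H. Qed.

Lemma IZR_small i : -1 < IZR i < 1 -> i = 0%Z.
Proof. intros [h1 h2]. apply lt_IZR in h1. apply lt_IZR in h2. lia. Qed.

Lemma IZR_01 i : -1 < IZR i < 2 -> (i = 0 \/ i = 1)%Z.
Proof. intros [h1 h2]. apply lt_IZR in h1. apply lt_IZR in h2. lia. Qed.

Lemma IZR_1 i : 0 < IZR i < 2 -> i = 1%Z.
Proof. intros [h1 h2]. apply lt_IZR in h1. apply lt_IZR in h2. lia. Qed.

Lemma IZR_m10 i : -2 < IZR i < 1 -> (i = -1 \/ i = 0)%Z.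
Proof. intros [h1 h2]. apply lt_IZR in h1. apply lt_IZR in h2. lia. Qed.

Lemma rep_uniq P T1 X1 Y1 T X Y : inLat P (T1 - T) (X1 - X) (Y1 - Y) ->
  -1 <= T1 <= 1 -> -1 < T < 1 -> -1 <= X1 <= 1 -> -1 < X < 1 -> -1 <= Y1 <= 1 -> -1 < Y < 1 ->
  T1 = T /\ X1 = X /\ Y1 = Y.
Proof.
  intros (i & j & k & e1 & e2 & e3) h1 h2 h3 h4 h5 h6.
  assert (i = 0%Z) by (apply IZR_small; lra). subst i.
  assert (j = 0%Z) by (apply IZR_small; lra). subst j.
  assert (k = 0%Z) by (apply IZR_small; lra). subst k.
  lra.
Qed.

Lemma Rabs_small w c s e : (w = c \/ w = - c) -> 0 <= c -> 0 < s -> s * c < e -> Rabs (w * s) < e.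
Proof.
  intros Hw Hc Hs Hse. apply Rabs_def1.
  - destruct Hw; subst; nra.
  - destruct Hw; subst; nra.
Qed.

Lemma setup P t v1 v2 h1 h2 h3 (L L' : letter -> Prop) : 0 < P < 1 ->
  interior3 (in_piece P L) t v1 v2 ->
  interior3 (in_piece P L') (t + h1) (v1 + h2) (v2 + h3) ->
  exists T X Y, genP P T X Y /\ -1 < T < 1 /\ -1 < X < 1 /\ -1 < Y < 1 /\
    exists t' v1' v2', inLat P (t' - T) (v1' - X) (v2' - Y) /\ in_piece P L t' v1' v2' /\
      in_piece P L' (t' + h1) (v1' + h2) (v2' + h3).
Proof.
  intros HP [e1 [He1 H1]] [e2 [He2 H2]].
  assert (Hp : in_piece P L t v1 v2).
  { apply H1; replace (_ - _) with 0 by ring; rewrite Rabs_R0; assumption. }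
  destruct Hp as (t0 & x0 & y0 & Hlat & Ht0 & Hx0 & Hy0 & _).
  destruct (sign_choice t0 1 Ht0 ltac:(lra)) as (wT & HwT & BT).
  destruct (sign_choice x0 2 Hx0 ltac:(lra)) as (wX & HwX & BX).
  destruct (sign_choice y0 3 Hy0 ltac:(lra)) as (wY & HwY & BY).
  set (hi := Rmin (/ 3) (Rmin (e1 / 3) (e2 / 3))).
  assert (Hhi : 0 < hi) by (unfold hi; repeat apply Rmin_glb_lt; lra).
  destruct (choose_s P t0 x0 y0 wT wX wY 0 hi Hhi) as (s & Hs & Hg);
    try (destruct HwT; destruct HwX; destruct HwY; subst; lra).
  assert (s1 : s < / 3) by (eapply Rlt_le_trans; [apply Hs| apply Rmin_l]).
  assert (s2 : s < e1 / 3) by (eapply Rlt_le_trans; [apply Hs| unfold hi; eapply Rle_trans; [apply Rmin_r| apply Rmin_l]]).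
  assert (s3 : s < e2 / 3) by (eapply Rlt_le_trans; [apply Hs| unfold hi; eapply Rle_trans; [apply Rmin_r| apply Rmin_r]]).
  exists (t0 + wT * s), (x0 + wX * s), (y0 + wY * s).
  split; [exact Hg|].
  split; [apply BT; lra|]. split; [apply BX; lra|]. split; [apply BY; lra|].
  exists (t + wT * s), (v1 + wX * s), (v2 + wY * s).
  split; [|split].
  - eapply lat_ext; [exact Hlat| ring | ring | ring].
  - apply H1.
    + replace (t + wT * s - t) with (wT * s) by ring. apply (Rabs_small wT 1); lra.
    + replace (v1 + wX * s - v1) with (wX * s) by ring. apply (Rabs_small wX 2); lra.
    + replace (v2 + wY * s - v2) with (wY * s) by ring. apply (Rabs_small wY 3); lra.
  - apply H2.
    + replace (t + wT * s + h1 - (t + h1)) with (wT * s) by ring. apply (Rabs_small wT 1); lra.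
    + replace (v1 + wX * s + h2 - (v1 + h2)) with (wX * s) by ring. apply (Rabs_small wX 2); lra.
    + replace (v2 + wY * s + h3 - (v2 + h3)) with (wY * s) by ring. apply (Rabs_small wY 3); lra.
Qed.

Ltac rIZR := repeat (rewrite plus_IZR || rewrite minus_IZR || rewrite mult_IZR || rewrite opp_IZR).
Ltac nzT Hg m n := let H := fresh in intro H; destruct (Hg m%Z ltac:(lia)) as (g1&_&_&_&_); apply (g1 n%Z); rIZR; lra.
Ltac nzX Hg m n := let H := fresh in intro H; destruct (Hg m%Z ltac:(lia)) as (_&g1&_&_&_); apply (g1 n%Z); rIZR; lra.
Ltac nzY Hg m n := let H := fresh in intro H; destruct (Hg m%Z ltac:(lia)) as (_&_&g1&_&_); apply (g1 n%Z); rIZR; lra.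
Ltac nzXT Hg m n := let H := fresh in intro H; destruct (Hg m%Z ltac:(lia)) as (_&_&_&g1&_); apply (g1 n%Z); rIZR; lra.
Ltac nzYT Hg m n := let H := fresh in intro H; destruct (Hg m%Z ltac:(lia)) as (_&_&_&_&g1); apply (g1 n%Z); rIZR; lra.

Lemma key_H P t v1 v2 (L L' : letter -> Prop) : 0 < P < 1 ->
  interior3 (in_piece P L) t v1 v2 ->
  interior3 (in_piece P L') (t + 2 * P) (v1 + 2 * P) (v2 + 2 * P) ->
  (L lE <-> L' lW).
Proof.
  intros HP H1 H2.
  destruct (setup P t v1 v2 _ _ _ L L' HP H1 H2) as
    (T & X & Y & Hg & hT & hX & hY & t' & v1' & v2' & Hlat & Hq & Hqh).
  destruct Hq as (T1 & X1 & Y1 & Hl1 & hT1 & hX1 & hY1 & u1 & u2 & u3 & sp & a & b & Hf & Hr & HL).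
  destruct (rep_uniq P T1 X1 Y1 T X Y) as (-> & -> & ->); auto.
  { eapply lat_ext; [exact (lat_sub _ _ _ _ _ _ _ Hlat Hl1)|ring|ring|ring]. }
  destruct Hqh as (T2 & X2 & Y2 & Hl2 & hT2 & hX2 & hY2 & u1' & u2' & u3' & sp' & a' & b' & Hf' & Hr' & HL').
  assert (Hl3 : inLat P (T + 2 * P - T2) (X + 2 * P - X2) (Y + 2 * P - Y2)).
  { eapply lat_ext; [exact (lat_sub _ _ _ _ _ _ _ Hl2 Hlat)|ring|ring|ring]. }
  destruct Hl3 as (d & j & k & E1 & E2 & E3).
  assert (Hd : (d = 0 \/ d = 1)%Z) by (apply IZR_01; lra).
  assert (nT1 : T2 <> 1) by nzT Hg (2)%Z ((2*d+1))%Z.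
  assert (nT2 : T2 <> -1) by nzT Hg (2)%Z ((2*d-1))%Z.
  assert (nT3 : T2 <> -1 + P) by nzT Hg (1)%Z ((2*d-1))%Z.
  assert (nT4 : T2 <> 1 - P) by nzT Hg (3)%Z ((2*d+1))%Z.
  assert (nX1 : X2 <> 1) by nzX Hg ((2-d))%Z ((2*j+1))%Z.
  assert (nX2 : X2 <> -1) by nzX Hg ((2-d))%Z ((2*j-1))%Z.
  assert (nY1 : Y2 <> 1) by nzY Hg ((2-d))%Z ((2*k+1))%Z.
  assert (nY2 : Y2 <> -1) by nzY Hg ((2-d))%Z ((2*k-1))%Z.
  assert (Hj : (j = 0 \/ j = 1)%Z) by (apply IZR_01; destruct Hd; subst; lra).
  assert (Hk : (k = 0 \/ k = 1)%Z) by (apply IZR_01; destruct Hd; subst; lra).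
  assert (cX : cutsOK P T X).
  { repeat split; try lra; [nzXT Hg (0)%Z (0)%Z | nzX Hg (1)%Z (1)%Z | nzXT Hg (1)%Z (2)%Z | nzX Hg ((-1))%Z ((-1))%Z | nzXT Hg ((-1))%Z ((-2))%Z]. }
  assert (cY : cutsOK P T Y).
  { repeat split; try lra; [nzYT Hg (0)%Z (0)%Z | nzY Hg (1)%Z (1)%Z | nzYT Hg (1)%Z (2)%Z | nzY Hg ((-1))%Z ((-1))%Z | nzYT Hg ((-1))%Z ((-2))%Z]. }
  assert (cX2 : cutsOK P T2 X2).
  { repeat split; try lra;
    [nzXT Hg ((-d))%Z ((2*j-2*d))%Z | nzX Hg ((3-d))%Z ((2*j+1))%Z | nzXT Hg ((1-d))%Z ((2+2*j-2*d))%Z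
    | nzX Hg ((1-d))%Z ((2*j-1))%Z | nzXT Hg ((-d-1))%Z ((-2+2*j-2*d))%Z]. }
  assert (cY2 : cutsOK P T2 Y2).
  { repeat split; try lra;
    [nzYT Hg ((-d))%Z ((2*k-2*d))%Z | nzY Hg ((3-d))%Z ((2*k+1))%Z | nzYT Hg ((1-d))%Z ((2+2*k-2*d))%Z
    | nzY Hg ((1-d))%Z ((2*k-1))%Z | nzYT Hg ((-d-1))%Z ((-2+2*k-2*d))%Z]. }
  assert (nT5 : T <> -1 + P) by nzT Hg ((-1))%Z ((-1))%Z.
  assert (nT6 : T <> 1 - P) by nzT Hg (1)%Z (1)%Z.
  apply fiber_strict in Hf; auto.
  apply fiber_strict in Hf'; [|lra|auto|auto].
  destruct Hr as (Ha & Hb & HcX & HcY).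
  destruct Hr' as (Ha' & Hb' & HcX' & HcY').
  apply (col_strict _ _ _ _ _ _ _ _ Hf cX Ha) in HcX.
  apply (col_strict _ _ _ _ _ _ _ _ Hf cY Hb) in HcY.
  apply (col_strict _ _ _ _ _ _ _ _ Hf' cX2 Ha') in HcX'.
  apply (col_strict _ _ _ _ _ _ _ _ Hf' cY2 Hb') in HcY'.
  pose proof (colH P T T2 X X2 d j _ _ _ _ _ _ _ _ a a' HP Hf Hf' ltac:(lra) ltac:(lra) Hd Hj Ha HcX Ha' HcX') as RX.
  pose proof (colH P T T2 Y Y2 d k _ _ _ _ _ _ _ _ b b' HP Hf Hf' ltac:(lra) ltac:(lra) Hd Hk Hb HcY Hb' HcY') as RY.
  rewrite <- (HL lE), <- (HL' lW).
  rewrite (rect_has_xor _ _ _ _ _ _ _ _ _ Hf Ha Hb), (rect_has_xor _ _ _ _ _ _ _ _ _ Hf' Ha' Hb').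
  destruct (diagEW _ _ _ _ _ _ Hf) as [D1 _]. destruct (diagEW _ _ _ _ _ _ Hf') as [_ D2].
  rewrite D1, D2, !(Nat.eqb_sym (fst _)), RX, RY.
  destruct Hd as [-> | ->]; cbn;
  destruct (a' =? fst (sp' lW))%nat, (b' =? fst (sp' lW))%nat; cbn; tauto.
Qed.

Lemma key_V P t v1 v2 (L L' : letter -> Prop) : 0 < P < 1 ->
  interior3 (in_piece P L) t v1 v2 ->
  interior3 (in_piece P L') (t + 2) (v1 + 0) (v2 + 2 * P) ->
  (L lN <-> L' lS).
Proof.
  intros HP H1 H2.
  destruct (setup P t v1 v2 _ _ _ L L' HP H1 H2) as
    (T & X & Y & Hg & hT & hX & hY & t' & v1' & v2' & Hlat & Hq & Hqh).
  destruct Hq as (T1 & X1 & Y1 & Hl1 & hT1 & hX1 & hY1 & u1 & u2 & u3 & sp & a & b & Hf & Hr & HL).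
  destruct (rep_uniq P T1 X1 Y1 T X Y) as (-> & -> & ->); auto.
  { eapply lat_ext; [exact (lat_sub _ _ _ _ _ _ _ Hlat Hl1)|ring|ring|ring]. }
  destruct Hqh as (T2 & X2 & Y2 & Hl2 & hT2 & hX2 & hY2 & u1' & u2' & u3' & sp' & a' & b' & Hf' & Hr' & HL').
  assert (Hl3 : inLat P (T + 2 - T2) (X + 0 - X2) (Y + 2 * P - Y2)).
  { eapply lat_ext; [exact (lat_sub _ _ _ _ _ _ _ Hl2 Hlat)|ring|ring|ring]. }
  destruct Hl3 as (d & j & k & E1 & E2 & E3).
  assert (d = 1%Z) by (apply IZR_1; lra). subst d.
  assert (ET : T2 = T) by lra. subst T2.
  assert (nX1 : X2 <> 1) by nzX Hg (-1)%Z (2*j+1)%Z.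
  assert (nX2 : X2 <> -1) by nzX Hg (-1)%Z (2*j-1)%Z.
  assert (nY1 : Y2 <> 1) by nzY Hg (1)%Z (2*k+1)%Z.
  assert (nY2 : Y2 <> -1) by nzY Hg (1)%Z (2*k-1)%Z.
  assert (Hj : (j = -1 \/ j = 0)%Z) by (apply IZR_m10; lra).
  assert (Hk : (k = 0 \/ k = 1)%Z) by (apply IZR_01; lra).
  assert (cX : cutsOK P T X).
  { repeat split; try lra; [nzXT Hg (0)%Z (0)%Z | nzX Hg (1)%Z (1)%Z | nzXT Hg (1)%Z (2)%Z | nzX Hg ((-1))%Z ((-1))%Z | nzXT Hg ((-1))%Z ((-2))%Z]. }
  assert (cY : cutsOK P T Y).
  { repeat split; try lra; [nzYT Hg (0)%Z (0)%Z | nzY Hg (1)%Z (1)%Z | nzYT Hg (1)%Z (2)%Z | nzY Hg ((-1))%Z ((-1))%Z | nzYT Hg ((-1))%Z ((-2))%Z]. }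
  assert (cX2 : cutsOK P T X2).
  { repeat split; try lra;
    [nzXT Hg (-1)%Z (2*j)%Z | nzX Hg 0%Z (1+2*j)%Z | nzXT Hg 0%Z (2+2*j)%Z
    | nzX Hg (-2)%Z (-1+2*j)%Z | nzXT Hg (-2)%Z (-2+2*j)%Z]. }
  assert (cY2 : cutsOK P T Y2).
  { repeat split; try lra;
    [nzYT Hg 1%Z (2*k)%Z | nzY Hg 2%Z (1+2*k)%Z | nzYT Hg 2%Z (2+2*k)%Z
    | nzY Hg 0%Z (-1+2*k)%Z | nzYT Hg 0%Z (-2+2*k)%Z]. }
  assert (nT5 : T <> -1 + P) by nzT Hg (-1)%Z (-1)%Z.
  assert (nT6 : T <> 1 - P) by nzT Hg 1%Z 1%Z.
  apply fiber_strict in Hf; auto.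
  apply fiber_strict in Hf'; auto.
  destruct Hr as (Ha & Hb & HcX & HcY).
  destruct Hr' as (Ha' & Hb' & HcX' & HcY').
  apply (col_strict _ _ _ _ _ _ _ _ Hf cX Ha) in HcX.
  apply (col_strict _ _ _ _ _ _ _ _ Hf cY Hb) in HcY.
  apply (col_strict _ _ _ _ _ _ _ _ Hf' cX2 Ha') in HcX'.
  apply (col_strict _ _ _ _ _ _ _ _ Hf' cY2 Hb') in HcY'.
  pose proof (colV P T X X2 j _ _ _ _ _ _ _ _ a a' HP Hf Hf' ltac:(lra) Hj Ha HcX Ha' HcX') as RX.
  pose proof (rowV P T Y Y2 k _ _ _ _ _ _ _ _ b b' HP Hf Hf' ltac:(lra) Hk Hb HcY Hb' HcY') as RY.
  rewrite <- (HL lN), <- (HL' lS).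
  rewrite (rect_has_xor _ _ _ _ _ _ _ _ _ Hf Ha Hb), (rect_has_xor _ _ _ _ _ _ _ _ _ Hf' Ha' Hb').
  rewrite (Nat.eqb_sym (fst (sp lN))), (Nat.eqb_sym (snd (sp lN))), RX, RY,
    (Nat.eqb_sym a'), (Nat.eqb_sym b').
  tauto.
Qed.

Theorem lemma3p7 (P V1 V2 V3 : R) :
  0 < P < 1 -> irrational P -> good_offset P V1 V2 V3 -> coherent P V1 V2 V3.
Proof.
  intros HP _ _ m n L L'. unfold tile_label. cbv zeta. split; intros H1 H2.
  - apply (key_H P _ _ _ L L' HP H1).
    unfold XiT, XiU1, XiU2 in *. rewrite plus_IZR in H2.
    replace (2 * P * (IZR m + 1 + / 2) + 2 * (IZR n + / 2) + V1) with
      (2 * P * (IZR m + / 2) + 2 * (IZR n + / 2) + V1 + 2 * P) in H2 by ring.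
    replace (2 * P * (IZR m + 1 + / 2) + V2) with (2 * P * (IZR m + / 2) + V2 + 2 * P) in H2 by ring.
    replace (2 * P * (IZR m + 1 + / 2) + 2 * P * (IZR n + / 2) + V3) with
      (2 * P * (IZR m + / 2) + 2 * P * (IZR n + / 2) + V3 + 2 * P) in H2 by ring.
    exact H2.
  - apply (key_V P _ _ _ L L' HP H1).
    unfold XiT, XiU1, XiU2 in *. rewrite plus_IZR in H2.
    replace (2 * P * (IZR m + / 2) + 2 * (IZR n + 1 + / 2) + V1) with
      (2 * P * (IZR m + / 2) + 2 * (IZR n + / 2) + V1 + 2) in H2 by ring.
    replace (2 * P * (IZR m + / 2) + V2) with (2 * P * (IZR m + / 2) + V2 + 0) in H2 by ring.
    replace (2 * P * (IZR m + / 2) + 2 * P * (IZR n + 1 + / 2) + V3) with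
      (2 * P * (IZR m + / 2) + 2 * P * (IZR n + / 2) + V3 + 2 * P) in H2 by ring.
    exact H2.
Qed.
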